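(* Every rectangle whose side lengths are positive integers can be domed.
   Context: All equilateral triangles have unit edge length. A polyiamond is a polygon that is a union of unit equilateral triangles (glued edge to edge). For a convex polygon $P$, $P$ can be (deltahedrally) domed if there is a convex polyhedron that has $P$ as one face and all of whose other faces are convex polyiamonds; the union of these other faces is the dome, and $P$ is its base. *)

(* Defs.v *)
From Stdlib Require Import Reals List.
Import ListNotations.
Open Scope R_scope.

Record pt := Pt { px : R; py : R; pz : R }.

Definition vadd (p q : pt) : pt := Pt (px p + px q) (py p + py q) (pz p + pz q).
Definition vsub (p q : pt) : pt := Pt (px p - px q) (py p - py q) (pz p - pz q).
Definition vscale (k : R) (p : pt) : pt := Pt (k * px p) (k * py p) (k * pz p).
Definition vzero : pt := Pt 0 0 0.
Definition dot (p q : pt) : R := px p * px q + py p * py q + pz p * pz q.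
Definition cross (p q : pt) : pt :=
  Pt (py p * pz q - pz p * py q) (pz p * px q - px p * pz q) (px p * py q - py p * px q).
Definition dist (p q : pt) : R := sqrt (dot (vsub p q) (vsub p q)).

Definition pset := pt -> Prop.

Definition conv (l : list pt) : pset := fun x =>
  exists wl : list (R * pt),
    (forall wp, In wp wl -> 0 <= fst wp /\ In (snd wp) l) /\
    fold_right (fun wp s => fst wp + s) 0 wl = 1 /\
    x = fold_right (fun wp s => vadd (vscale (fst wp) (snd wp)) s) vzero wl.

(* A convex polyhedron: convex hull of finitely many points, not all coplanar
   (i.e. a full-dimensional convex polytope in R^3). *)
Definition convex_polyhedron (V : list pt) : Prop :=
  exists p0 p1 p2 p3, In p0 V /\ In p1 V /\ In p2 V /\ In p3 V /\
    dot (vsub p1 p0) (cross (vsub p2 p0) (vsub p3 p0)) <> 0.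

(* F is a face (facet) of the convex body K: the intersection of K with a
   supporting plane, which is two-dimensional (contains three non-collinear
   points). *)
Definition is_face (K F : pset) : Prop :=
  exists (n : pt) (c : R), n <> vzero /\
    (forall x, K x -> dot n x <= c) /\
    (forall x, F x <-> (K x /\ dot n x = c)) /\
    exists p q r, F p /\ F q /\ F r /\ cross (vsub q p) (vsub r p) <> vzero.

Definition rectangle (o u v : pt) (a b : R) : pset := fun x =>
  exists s t, 0 <= s <= a /\ 0 <= t <= b /\
    x = vadd o (vadd (vscale s u) (vscale t v)).

Definition orthonormal (u v : pt) : Prop :=
  dot u u = 1 /\ dot v v = 1 /\ dot u v = 0.

Definition unit_triangle (T : pt * pt * pt) : Prop :=
  let '(p, q, r) := T in dist p q = 1 /\ dist q r = 1 /\ dist r p = 1.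

Definition tri_region (T : pt * pt * pt) : pset :=
  let '(p, q, r) := T in conv [p; q; r].

Definition tri_vertices (T : pt * pt * pt) : list pt :=
  let '(p, q, r) := T in [p; q; r].

Definition edge_to_edge (T1 T2 : pt * pt * pt) : Prop :=
  (forall x, ~ (tri_region T1 x /\ tri_region T2 x)) \/
  (exists v, In v (tri_vertices T1) /\ In v (tri_vertices T2) /\
     forall x, (tri_region T1 x /\ tri_region T2 x) <-> x = v) \/
  (exists v w, v <> w /\ In v (tri_vertices T1) /\ In v (tri_vertices T2) /\
     In w (tri_vertices T1) /\ In w (tri_vertices T2) /\
     forall x, (tri_region T1 x /\ tri_region T2 x) <-> conv [v; w] x).

Definition polyiamond (F : pset) : Prop :=
  exists Ts : list (pt * pt * pt),
    (forall T, In T Ts -> unit_triangle T) /\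
    (forall i j d, i <> j -> (i < length Ts)%nat -> (j < length Ts)%nat ->
        edge_to_edge (nth i Ts d) (nth j Ts d)) /\
    (forall x, F x <-> exists T, In T Ts /\ tri_region T x).

Definition convex_set (F : pset) : Prop :=
  forall x y t, F x -> F y -> 0 <= t <= 1 ->
    F (vadd (vscale (1 - t) x) (vscale t y)).

Definition convex_polyiamond (F : pset) : Prop := convex_set F /\ polyiamond F.

Definition domed_by (V : list pt) (P : pset) : Prop :=
  convex_polyhedron V /\ is_face (conv V) P /\
  forall F, is_face (conv V) F -> (forall x, F x <-> P x) \/ convex_polyiamond F.

(* Main.v *)
Require Import Defs.
From Stdlib Require Import Reals List Lra Lia ZArith Classical FinFun.
Import ListNotations.
Open Scope R_scope.

Lemma pt_eq : forall p q, px p = px q -> py p = py q -> pz p = pz q -> p = q.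
Proof. intros [] []; simpl; intros; subst; reflexivity. Qed.

Definition wsum (wl : list (R*pt)) := fold_right (fun wp s => fst wp + s) 0 wl.
Definition wcomb (wl : list (R*pt)) :=
  fold_right (fun wp s => vadd (vscale (fst wp) (snd wp)) s) vzero wl.

Lemma conv_def l x : conv l x <-> exists wl,
  (forall wp, In wp wl -> 0 <= fst wp /\ In (snd wp) l) /\ wsum wl = 1 /\ x = wcomb wl.
Proof. reflexivity. Qed.

Lemma dot_comb n w p s : dot n (vadd (vscale w p) s) = w * dot n p + dot n s.
Proof. unfold dot, vadd, vscale; simpl; ring. Qed.

Lemma dot_zero n : dot n vzero = 0.
Proof. unfold dot, vzero; simpl; ring. Qed.

Lemma wl_le l n c : (forall v, In v l -> dot n v <= c) -> forall wl,
  (forall wp, In wp wl -> 0 <= fst wp /\ In (snd wp) l) ->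
  dot n (wcomb wl) <= c * wsum wl.
Proof.
  intros Hv wl; induction wl as [|[w p] wl IH]; intros Hw; simpl.
  - rewrite dot_zero; lra.
  - rewrite dot_comb. destruct (Hw (w,p) (or_introl eq_refl)) as [H1 H2]; simpl in *.
    specialize (Hv p H2). assert (IH' := IH (fun wp H => Hw wp (or_intror H))).
    assert (w * dot n p <= w * c) by (apply Rmult_le_compat_l; auto). lra.
Qed.

Lemma conv_le l n c x : (forall v, In v l -> dot n v <= c) -> conv l x -> dot n x <= c.
Proof.
  intros Hv (wl & Hw & Hs & Hx). subst x. pose proof (wl_le l n c Hv wl Hw).
  unfold wsum in Hs. unfold wcomb. fold (wsum wl) in *. fold (wcomb wl) in *.
  rewrite Hs in H; lra.
Qed.

Lemma conv_eq l n c x : (forall v, In v l -> dot n v = c) -> conv l x -> dot n x = c.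
Proof.
  intros Hv Hx.
  assert (dot n x <= c) by (apply (conv_le l); auto; intros v Hv'; rewrite Hv; auto; lra).
  assert (dot (vscale (-1) n) x <= -c).
  { apply (conv_le l); auto. intros v Hv'. unfold dot, vscale in *; simpl.
    specialize (Hv v Hv'). lra. }
  unfold dot, vscale in *; simpl in *. lra.
Qed.

Lemma conv_mono l l' x : incl l l' -> conv l x -> conv l' x.
Proof.
  intros Hi (wl & Hw & Hs & Hx). exists wl; split; auto.
  intros wp H; destruct (Hw wp H); split; auto.
Qed.

Lemma conv_in l v : In v l -> conv l v.
Proof.
  intros H. exists [(1, v)]. split; [|split].
  - intros wp [<-|[]]; simpl; split; auto; lra.
  - simpl; ring.
  - apply pt_eq; simpl; ring.
Qed.

Lemma conv_restrict l l' n c x :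
  (forall v, In v l -> dot n v <= c) ->
  (forall v, In v l -> dot n v < c \/ In v l') ->
  conv l x -> dot n x = c -> conv l' x.
Proof.
  intros Hle Hin (wl & Hw & Hs & Hx) Hdx.
  set (f := fun wp : R * pt => if Rlt_dec (dot n (snd wp)) c then false else true).
  assert (Aux : forall wl0, (forall wp, In wp wl0 -> 0 <= fst wp /\ In (snd wp) l) ->
     dot n (wcomb wl0) = c * wsum wl0 ->
     wsum (filter f wl0) = wsum wl0 /\ wcomb (filter f wl0) = wcomb wl0).
  { induction wl0 as [|[w p] wl0 IH]; intros Hw0 Hd0; [simpl; auto|].
    destruct (Hw0 (w,p) (or_introl eq_refl)) as [H1 H2]; simpl in *.
    assert (Hr := fun wp H => Hw0 wp (or_intror H)).
    pose proof (wl_le l n c Hle wl0 Hr). rewrite dot_comb in Hd0.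
    pose proof (Hle p H2).
    assert (w * dot n p <= w * c) by (apply Rmult_le_compat_l; auto).
    assert (E1 : dot n (wcomb wl0) = c * wsum wl0) by lra.
    destruct (IH Hr E1) as [IH1 IH2].
    change (filter f ((w,p)::wl0)) with (if f (w,p) then (w,p) :: filter f wl0 else filter f wl0).
    destruct (Rlt_dec (dot n p) c) as [Hlt|Hnlt].
    - assert (Hf : f (w,p) = false) by (unfold f; simpl; destruct (Rlt_dec _ _); [reflexivity | contradiction]).
      rewrite Hf.
      assert (w * (dot n p - c) = 0) by lra.
      apply Rmult_integral in H4. destruct H4 as [->|]; [|lra].
      rewrite IH1, IH2. split; [unfold wsum; simpl; ring|]. unfold wcomb; simpl.
      fold (wcomb wl0). apply pt_eq; simpl; ring.
    - assert (Hf : f (w,p) = true) by (unfold f; simpl; destruct (Rlt_dec _ _); [contradiction | reflexivity]).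
      rewrite Hf.
      unfold wsum, wcomb; simpl. fold (wsum (filter f wl0)) (wcomb (filter f wl0)).
      fold (wsum wl0) (wcomb wl0). rewrite IH1, IH2. auto. }
  assert (Hd : dot n (wcomb wl) = c * wsum wl).
  { unfold wsum in Hs. fold (wsum wl) in Hs. rewrite Hs. subst x. unfold wcomb. rewrite <- Hdx. 
    ring_simplify. reflexivity. }
  destruct (Aux wl Hw Hd) as [A1 A2].
  exists (filter f wl). split; [|split].
  - intros wp Hwp. apply filter_In in Hwp. destruct Hwp as [H1 H2].
    destruct (Hw wp H1) as [H3 H4]. split; auto.
    unfold f in H2. destruct (Rlt_dec (dot n (snd wp)) c); [discriminate|].
    destruct (Hin _ H4); auto. contradiction.
  - change (wsum (filter f wl) = 1). rewrite A1; auto.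
  - change (x = wcomb (filter f wl)). rewrite A2; auto.
Qed.
Definition comb4 (w1 w2 w3 w4 : R) (p1 p2 p3 p4 : pt) : pt :=
  Pt (w1*px p1 + w2*px p2 + w3*px p3 + w4*px p4)
     (w1*py p1 + w2*py p2 + w3*py p3 + w4*py p4)
     (w1*pz p1 + w2*pz p2 + w3*pz p3 + w4*pz p4).

Lemma conv4_iff p1 p2 p3 p4 x : conv [p1;p2;p3;p4] x <-> exists w1 w2 w3 w4,
  0 <= w1 /\ 0 <= w2 /\ 0 <= w3 /\ 0 <= w4 /\ w1 + w2 + w3 + w4 = 1 /\
  x = comb4 w1 w2 w3 w4 p1 p2 p3 p4.
Proof.
  split.
  - intros (wl & Hw & Hs & Hx).
    assert (Aux : forall wl0, (forall wp, In wp wl0 -> 0 <= fst wp /\ In (snd wp) [p1;p2;p3;p4]) ->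
      exists w1 w2 w3 w4, 0 <= w1 /\ 0 <= w2 /\ 0 <= w3 /\ 0 <= w4 /\
        w1 + w2 + w3 + w4 = wsum wl0 /\ wcomb wl0 = comb4 w1 w2 w3 w4 p1 p2 p3 p4).
    { induction wl0 as [|[w p] wl0 IH]; intros Hw0.
      - exists 0, 0, 0, 0. repeat split; try lra. unfold wsum; simpl; ring.
        apply pt_eq; simpl; ring.
      - destruct (Hw0 (w,p) (or_introl eq_refl)) as [H1 H2]; simpl in H1, H2.
        destruct (IH (fun wp H => Hw0 wp (or_intror H))) as (w1 & w2 & w3 & w4 & h1 & h2 & h3 & h4 & hs & hc).
        unfold wsum, wcomb; simpl; fold (wsum wl0) (wcomb wl0). rewrite hc, <- hs.
        destruct H2 as [<-|[<-|[<-|[<-|[]]]]].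
        + exists (w1 + w), w2, w3, w4. repeat split; try lra. apply pt_eq; simpl; ring.
        + exists w1, (w2 + w), w3, w4. repeat split; try lra. apply pt_eq; simpl; ring.
        + exists w1, w2, (w3 + w), w4. repeat split; try lra. apply pt_eq; simpl; ring.
        + exists w1, w2, w3, (w4 + w). repeat split; try lra. apply pt_eq; simpl; ring. }
    destruct (Aux wl Hw) as (w1 & w2 & w3 & w4 & h1 & h2 & h3 & h4 & hs & hc).
    exists w1, w2, w3, w4. repeat split; auto.
    + rewrite hs; exact Hs.
    + rewrite Hx; exact hc.
  - intros (w1 & w2 & w3 & w4 & h1 & h2 & h3 & h4 & hs & ->).
    exists [(w1,p1);(w2,p2);(w3,p3);(w4,p4)]. split; [|split].
    + intros wp H. simpl in H. destruct H as [<-|[<-|[<-|[<-|[]]]]]; simpl; split; auto 6.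
    + simpl. lra.
    + apply pt_eq; simpl; ring.
Qed.

Lemma conv_ext l l' : incl l l' -> incl l' l -> forall x, conv l x <-> conv l' x.
Proof. intros; split; apply conv_mono; auto. Qed.

Lemma conv2_iff p q x : conv [p;q] x <-> exists s, 0 <= s <= 1 /\
  x = Pt ((1-s)*px p + s*px q) ((1-s)*py p + s*py q) ((1-s)*pz p + s*pz q).
Proof.
  rewrite (conv_ext [p;q] [p;q;q;q]); [|intros y; simpl; tauto|intros y; simpl; tauto].
  rewrite conv4_iff. split.
  - intros (w1 & w2 & w3 & w4 & h1 & h2 & h3 & h4 & hs & ->).
    exists (w2 + w3 + w4). split; [lra|]. apply pt_eq; simpl.
    all: replace w1 with (1 - (w2+w3+w4)) by lra; ring.
  - intros (s & hs & ->). exists (1-s), s, 0, 0. repeat split; try lra.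
    apply pt_eq; simpl; ring.
Qed.

Lemma conv3_iff p q r x : conv [p;q;r] x <-> exists u v w,
  0 <= u /\ 0 <= v /\ 0 <= w /\ u + v + w = 1 /\ x = comb4 u v w 0 p q r r.
Proof.
  rewrite (conv_ext [p;q;r] [p;q;r;r]); [|intros y; simpl; tauto|intros y; simpl; tauto].
  rewrite conv4_iff. split.
  - intros (w1 & w2 & w3 & w4 & h1 & h2 & h3 & h4 & hs & ->).
    exists w1, w2, (w3 + w4). repeat split; try lra. apply pt_eq; simpl; ring.
  - intros (u & v & w & h1 & h2 & h3 & hs & ->). exists u, v, w, 0. repeat split; auto; lra.
Qed.

Lemma convex4 p1 p2 p3 p4 : convex_set (conv [p1;p2;p3;p4]).
Proof.
  intros x y t Hx Hy Ht. rewrite conv4_iff in *.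
  destruct Hx as (w1 & w2 & w3 & w4 & h1 & h2 & h3 & h4 & hs & ->).
  destruct Hy as (v1 & v2 & v3 & v4 & g1 & g2 & g3 & g4 & gs & ->).
  exists ((1-t)*w1 + t*v1), ((1-t)*w2 + t*v2), ((1-t)*w3 + t*v3), ((1-t)*w4 + t*v4).
  repeat split; try nra. apply pt_eq; simpl; ring.
Qed.

Lemma convex_polyiamond_ext (F G : pset) : (forall x, F x <-> G x) ->
  convex_polyiamond G -> convex_polyiamond F.
Proof.
  intros H [Hc (Ts & H1 & H2 & H3)]. split.
  - intros x y t Hx Hy Ht. apply H. apply H in Hx, Hy. apply Hc; auto.
  - exists Ts. split; [|split]; auto. intros x. rewrite H. apply H3.
Qed.
Definition phi (O e1 e2 : pt) (X Y : R) : pt :=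
  Pt (px O + X*px e1 + Y*px e2) (py O + X*py e1 + Y*py e2) (pz O + X*pz e1 + Y*pz e2).

Definition gram (e1 e2 : pt) := dot e1 e1 = 1 /\ dot e2 e2 = 1 /\ dot e1 e2 = 1/2.

Lemma phi_inj O e1 e2 X Y X' Y' : gram e1 e2 ->
  phi O e1 e2 X Y = phi O e1 e2 X' Y' -> X = X' /\ Y = Y'.
Proof.
  intros (g1 & g2 & g3) H.
  assert (K1 : forall X Y, dot e1 (phi O e1 e2 X Y) = dot e1 O + X * dot e1 e1 + Y * dot e1 e2)
    by (intros; unfold dot, phi; simpl; ring).
  assert (K2 : forall X Y, dot e2 (phi O e1 e2 X Y) = dot e2 O + X * dot e1 e2 + Y * dot e2 e2)
    by (intros; unfold dot, phi; simpl; ring).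
  assert (H1 := f_equal (dot e1) H). assert (H2 := f_equal (dot e2) H).
  rewrite !K1 in H1. rewrite !K2 in H2. rewrite g1, g3 in H1. rewrite g2, g3 in H2.
  split; lra.
Qed.

Lemma phi_dist O e1 e2 X Y X' Y' : gram e1 e2 ->
  dot (vsub (phi O e1 e2 X Y) (phi O e1 e2 X' Y')) (vsub (phi O e1 e2 X Y) (phi O e1 e2 X' Y'))
  = (X-X')*(X-X') + (X-X')*(Y-Y') + (Y-Y')*(Y-Y').
Proof.
  intros (g1 & g2 & g3).
  transitivity ((X-X')*(X-X') * dot e1 e1 + 2*(X-X')*(Y-Y') * dot e1 e2 + (Y-Y')*(Y-Y')*dot e2 e2).
  - unfold dot, vsub, phi; simpl; ring.
  - rewrite g1, g2, g3. field.
Qed.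

Definition code := (bool * Z * Z)%type.

Definition tri (O e1 e2 : pt) (c : code) : pt * pt * pt :=
  match c with
  | (true, i, j) => (phi O e1 e2 (IZR i) (IZR j), phi O e1 e2 (IZR i + 1) (IZR j),
                     phi O e1 e2 (IZR i) (IZR j + 1))
  | (false, i, j) => (phi O e1 e2 (IZR i + 1) (IZR j), phi O e1 e2 (IZR i) (IZR j + 1),
                     phi O e1 e2 (IZR i + 1) (IZR j + 1))
  end.

Definition verts2 (c : code) : list (R * R) :=
  match c with
  | (true, i, j) => [(IZR i, IZR j); (IZR i + 1, IZR j); (IZR i, IZR j + 1)]
  | (false, i, j) => [(IZR i + 1, IZR j); (IZR i, IZR j + 1); (IZR i + 1, IZR j + 1)]
  end.

Definition in2 (c : code) (X Y : R) : Prop :=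
  match c with
  | (true, i, j) => IZR i <= X /\ IZR j <= Y /\ X + Y <= IZR i + IZR j + 1
  | (false, i, j) => X <= IZR i + 1 /\ Y <= IZR j + 1 /\ IZR i + IZR j + 1 <= X + Y
  end.

Lemma tri_vertices_map O e1 e2 c :
  tri_vertices (tri O e1 e2 c) = map (fun P => phi O e1 e2 (fst P) (snd P)) (verts2 c).
Proof. destruct c as [[[] i] j]; reflexivity. Qed.

Lemma tri_unit O e1 e2 c : gram e1 e2 -> unit_triangle (tri O e1 e2 c).
Proof.
  intros G. destruct c as [[[] i] j]; unfold unit_triangle, tri; cbv iota beta; unfold Defs.dist;
  rewrite !phi_dist by auto; repeat split;
  match goal with |- sqrt ?e = 1 => replace e with 1 by ring; apply sqrt_1 end.
Qed.

Lemma tri_region_iff O e1 e2 c x : tri_region (tri O e1 e2 c) x <->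
  exists X Y, x = phi O e1 e2 X Y /\ in2 c X Y.
Proof.
  destruct c as [[[] i] j]; unfold tri_region, tri, in2; rewrite conv3_iff; split.
  - intros (u & v & w & h1 & h2 & h3 & hs & ->). exists (IZR i + v), (IZR j + w).
    split; [|lra]. replace u with (1 - v - w) by lra. apply pt_eq; unfold phi; simpl; ring.
  - intros (X & Y & -> & h1 & h2 & h3).
    exists (1 - (X - IZR i) - (Y - IZR j)), (X - IZR i), (Y - IZR j).
    repeat split; try lra. apply pt_eq; unfold phi; simpl; ring.
  - intros (u & v & w & h1 & h2 & h3 & hs & ->). exists (IZR i + 1 - v), (IZR j + 1 - u).
    split; [|lra]. replace w with (1 - v - u) by lra. apply pt_eq; unfold phi; simpl; ring.
  - intros (X & Y & -> & h1 & h2 & h3).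
    exists (IZR j + 1 - Y), (IZR i + 1 - X), (X + Y - IZR i - IZR j - 1).
    repeat split; try lra. apply pt_eq; unfold phi; simpl; ring.
Qed.
Ltac zf := apply le_IZR; rewrite ?plus_IZR, ?minus_IZR; lra.
Ltac find_in := first [ left; f_equal; lra | right; find_in ].

Ltac vcase P := right; left; exists P; split; [simpl; rewrite ?plus_IZR, ?minus_IZR; find_in|];
  split; [simpl; rewrite ?plus_IZR, ?minus_IZR; find_in|];
  intros X Y; simpl; rewrite ?plus_IZR, ?minus_IZR; split;
  [intros [[? [? ?]] [? [? ?]]]; split; lra | intros [-> ->]; repeat split; lra].

Definition E2E (c1 c2 : code) : Prop :=
  (forall X Y, ~ (in2 c1 X Y /\ in2 c2 X Y)) \/
  (exists P, In P (verts2 c1) /\ In P (verts2 c2) /\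
     forall X Y, (in2 c1 X Y /\ in2 c2 X Y) <-> (X = fst P /\ Y = snd P)) \/
  (exists P Q, P <> Q /\ In P (verts2 c1) /\ In P (verts2 c2) /\
     In Q (verts2 c1) /\ In Q (verts2 c2) /\
     forall X Y, (in2 c1 X Y /\ in2 c2 X Y) <->
       exists s, 0 <= s <= 1 /\ X = (1-s)*fst P + s*fst Q /\ Y = (1-s)*snd P + s*snd Q).

Lemma E2E_sym c1 c2 : E2E c2 c1 -> E2E c1 c2.
Proof.
  intros [H|[(P & h1 & h2 & h3)|(P & Q & h0 & h1 & h2 & h3 & h4 & h5)]].
  - left. intros X Y [? ?]. apply (H X Y); split; auto.
  - right; left. exists P; split; auto; split; auto. intros X Y; rewrite <- h3; tauto.
  - right; right. exists P, Q; repeat split; auto. all: intros; apply h5; tauto.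
Qed.

Lemma e2e_uu i j i' j' : (i, j) <> (i', j') -> E2E (true, i, j) (true, i', j').
Proof.
  intros Hn. destruct (classic (exists X Y, in2 (true,i,j) X Y /\ in2 (true,i',j') X Y))
    as [(X0 & Y0 & H1 & H2)|Hn2]; [|left; intros X Y H; apply Hn2; eauto].
  simpl in H1, H2.
  assert (i + j <= i + j + 1)%Z by lia.
  assert (i' + j <= i + j + 1)%Z by zf. assert (i + j' <= i + j + 1)%Z by zf.
  assert (i' + j' <= i + j + 1)%Z by zf. assert (i + j <= i' + j' + 1)%Z by zf.
  assert (i' + j <= i' + j' + 1)%Z by zf. assert (i + j' <= i' + j' + 1)%Z by zf.
  assert (~ (i = i' /\ j = j')) by (intros [-> ->]; auto).
  assert (C : ((i' = i+1 /\ j' = j) \/ (i' = i /\ j' = j+1) \/ (i' = i-1 /\ j' = j) \/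
     (i' = i /\ j' = j-1) \/ (i' = i+1 /\ j' = j-1) \/ (i' = i-1 /\ j' = j+1))%Z) by lia.
  destruct C as [[-> ->]|[[-> ->]|[[-> ->]|[[-> ->]|[[-> ->]|[-> ->]]]]]].
  - vcase (IZR i + 1, IZR j).
  - vcase (IZR i, IZR j + 1).
  - vcase (IZR i, IZR j).
  - vcase (IZR i, IZR j).
  - vcase (IZR i + 1, IZR j).
  - vcase (IZR i, IZR j + 1).
Qed.

Lemma e2e_dd i j i' j' : (i, j) <> (i', j') -> E2E (false, i, j) (false, i', j').
Proof.
  intros Hn. destruct (classic (exists X Y, in2 (false,i,j) X Y /\ in2 (false,i',j') X Y))
    as [(X0 & Y0 & H1 & H2)|Hn2]; [|left; intros X Y H; apply Hn2; eauto].
  simpl in H1, H2.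
  assert (i + j <= i' + j + 1)%Z by zf. assert (i + j <= i + j' + 1)%Z by zf.
  assert (i + j <= i' + j' + 1)%Z by zf. assert (i' + j' <= i + j + 1)%Z by zf.
  assert (i' + j' <= i' + j + 1)%Z by zf. assert (i' + j' <= i + j' + 1)%Z by zf.
  assert (~ (i = i' /\ j = j')) by (intros [-> ->]; auto).
  assert (C : ((i' = i+1 /\ j' = j) \/ (i' = i /\ j' = j+1) \/ (i' = i-1 /\ j' = j) \/
     (i' = i /\ j' = j-1) \/ (i' = i+1 /\ j' = j-1) \/ (i' = i-1 /\ j' = j+1))%Z) by lia.
  destruct C as [[-> ->]|[[-> ->]|[[-> ->]|[[-> ->]|[[-> ->]|[-> ->]]]]]].
  - vcase (IZR i + 1, IZR j + 1).
  - vcase (IZR i + 1, IZR j + 1).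
  - vcase (IZR i, IZR j + 1).
  - vcase (IZR i + 1, IZR j).
  - vcase (IZR i + 1, IZR j).
  - vcase (IZR i, IZR j + 1).
Qed.

Lemma e2e_ud i j i' j' : E2E (true, i, j) (false, i', j').
Proof.
  destruct (classic (exists X Y, in2 (true,i,j) X Y /\ in2 (false,i',j') X Y))
    as [(X0 & Y0 & H1 & H2)|Hn2]; [|left; intros X Y H; apply Hn2; eauto].
  simpl in H1, H2.
  assert (i <= i' + 1)%Z by zf. assert (j <= j' + 1)%Z by zf.
  assert (i' + j' <= i + j)%Z by zf. assert (i + j <= i' + j' + 2)%Z by zf.
  assert (C : ((i' = i /\ j' = j) \/ (i' = i-1 /\ j' = j) \/ (i' = i /\ j' = j-1) \/
     (i' = i-1 /\ j' = j-1) \/ (i' = i+1 /\ j' = j-1) \/ (i' = i-1 /\ j' = j+1))%Z) by lia.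
  destruct C as [[-> ->]|[[-> ->]|[[-> ->]|[[-> ->]|[[-> ->]|[-> ->]]]]]].
  - right; right. exists (IZR i + 1, IZR j), (IZR i, IZR j + 1).
    split; [intro Heq; injection Heq; lra|].
    simpl; rewrite ?plus_IZR, ?minus_IZR.
    split; [find_in|]; split; [find_in|]; split; [find_in|]; split; [find_in|].
    intros X Y; split.
    + intros [[? [? ?]] [? [? ?]]]. exists (IZR i + 1 - X). repeat split; lra.
    + intros (s & Hs & -> & ->). repeat split; lra.
  - right; right. exists (IZR i, IZR j), (IZR i, IZR j + 1).
    split; [intro Heq; injection Heq; lra|].
    simpl; rewrite ?plus_IZR, ?minus_IZR.
    split; [find_in|]; split; [find_in|]; split; [find_in|]; split; [find_in|].
    intros X Y; split.
    + intros [[? [? ?]] [? [? ?]]]. exists (Y - IZR j). repeat split; lra.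
    + intros (s & Hs & -> & ->). repeat split; lra.
  - right; right. exists (IZR i, IZR j), (IZR i + 1, IZR j).
    split; [intro Heq; injection Heq; lra|].
    simpl; rewrite ?plus_IZR, ?minus_IZR.
    split; [find_in|]; split; [find_in|]; split; [find_in|]; split; [find_in|].
    intros X Y; split.
    + intros [[? [? ?]] [? [? ?]]]. exists (X - IZR i). repeat split; lra.
    + intros (s & Hs & -> & ->). repeat split; lra.
  - vcase (IZR i, IZR j).
  - vcase (IZR i + 1, IZR j).
  - vcase (IZR i, IZR j + 1).
Qed.

Lemma e2e_2d (c1 c2 : code) : c1 <> c2 -> E2E c1 c2.
Proof.
  destruct c1 as [[[] i] j], c2 as [[[] i'] j']; intros Hn.
  - apply e2e_uu. intro H; apply Hn; injection H; intros; subst; reflexivity.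
  - apply e2e_ud.
  - apply E2E_sym, e2e_ud.
  - apply e2e_dd. intro H; apply Hn; injection H; intros; subst; reflexivity.
Qed.
Lemma both_iff O e1 e2 c1 c2 x : gram e1 e2 ->
  (tri_region (tri O e1 e2 c1) x /\ tri_region (tri O e1 e2 c2) x) <->
  exists X Y, x = phi O e1 e2 X Y /\ in2 c1 X Y /\ in2 c2 X Y.
Proof.
  intros G. rewrite !tri_region_iff. split.
  - intros [(X & Y & -> & h1) (X' & Y' & E & h2)].
    apply phi_inj in E; auto. destruct E as [<- <-]. exists X, Y; auto.
  - intros (X & Y & -> & h1 & h2). split; exists X, Y; auto.
Qed.

Lemma e2e_3d O e1 e2 c1 c2 : gram e1 e2 -> c1 <> c2 ->
  edge_to_edge (tri O e1 e2 c1) (tri O e1 e2 c2).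
Proof.
  intros G Hn. unfold edge_to_edge.
  destruct (e2e_2d c1 c2 Hn) as [H|[(P & h1 & h2 & h3)|(P & Q & h0 & h1 & h2 & h3 & h4 & h5)]].
  - left. intros x Hx. apply both_iff in Hx; auto. destruct Hx as (X & Y & _ & H1 & H2).
    apply (H X Y); auto.
  - right; left. exists (phi O e1 e2 (fst P) (snd P)). rewrite !tri_vertices_map.
    split; [apply in_map_iff; exists P; auto|]. split; [apply in_map_iff; exists P; auto|].
    intros x. rewrite both_iff by auto. split.
    + intros (X & Y & -> & H1 & H2). destruct (proj1 (h3 X Y) (conj H1 H2)) as [-> ->]; auto.
    + intros ->. exists (fst P), (snd P). split; auto. apply h3; auto.
  - right; right. exists (phi O e1 e2 (fst P) (snd P)), (phi O e1 e2 (fst Q) (snd Q)).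
    rewrite !tri_vertices_map. split.
    { intro E. apply phi_inj in E; auto. apply h0. destruct P, Q; simpl in E; destruct E; subst; auto. }
    split; [apply in_map_iff; exists P; auto|]. split; [apply in_map_iff; exists P; auto|].
    split; [apply in_map_iff; exists Q; auto|]. split; [apply in_map_iff; exists Q; auto|].
    intros x. rewrite both_iff by auto. rewrite conv2_iff. split.
    + intros (X & Y & -> & H1 & H2). destruct (proj1 (h5 X Y) (conj H1 H2)) as (s & hs & -> & ->).
      exists s; split; auto. apply pt_eq; unfold phi; simpl; ring.
    + intros (s & hs & ->). exists ((1-s)*fst P + s*fst Q), ((1-s)*snd P + s*snd Q).
      split; [apply pt_eq; unfold phi; simpl; ring|]. apply h5. exists s; auto.
Qed.
Lemma floor_ex (n : Z) (r : R) : (0 <= n)%Z -> 0 <= r <= IZR n + 1 ->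
  exists i : Z, (0 <= i <= n)%Z /\ IZR i <= r <= IZR i + 1.
Proof.
  intros Hn Hr. destruct (archimed r) as [h1 h2].
  assert (F1 : IZR (up r - 1) <= r) by (rewrite minus_IZR; lra).
  assert (F2 : r < IZR (up r - 1) + 1) by (rewrite minus_IZR; lra).
  assert (F0 : (0 < up r)%Z) by (apply lt_IZR; lra).
  assert (F3 : (0 <= up r - 1)%Z) by lia.
  destruct (Z_le_gt_dec (up r - 1) n) as [H|H].
  - exists (up r - 1)%Z. split; [lia|lra].
  - exists n. split; [lia|]. assert (IZR n + 1 <= IZR (up r - 1)).
    { rewrite <- plus_IZR. apply IZR_le. lia. }
    lra.
Qed.

Definition zrange (n : Z) : list Z := map Z.of_nat (seq 0 (Z.to_nat n)).

Lemma in_zrange n z : In z (zrange n) <-> (0 <= z < n)%Z.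
Proof.
  unfold zrange. rewrite in_map_iff. split.
  - intros (k & <- & Hk). apply in_seq in Hk. lia.
  - intros H. exists (Z.to_nat z). split; [lia|]. apply in_seq. lia.
Qed.

Lemma nodup_zrange n : NoDup (zrange n).
Proof. apply Injective_map_NoDup; [intros a b; lia|apply seq_NoDup]. Qed.

Lemma nodup_prod {A B : Type} (l1 : list A) (l2 : list B) :
  NoDup l1 -> NoDup l2 -> NoDup (list_prod l1 l2).
Proof.
  induction l1 as [|a l1 IH]; intros H1 H2; simpl; [constructor|].
  inversion H1; subst. apply NoDup_app.
  - apply Injective_map_NoDup; auto. intros x y E; injection E; auto.
  - apply IH; auto.
  - intros [a' b'] Ha Hb. apply in_map_iff in Ha. destruct Ha as (y & E & _).
    injection E; intros; subst. apply in_prod_iff in Hb. tauto.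
Qed.

Definition valid (m : Z) (c : code) : bool :=
  match c with (b, i, j) => if b then (i + j <? m)%Z else (i + j + 1 <? m)%Z end.

Definition codes (m k : Z) : list code :=
  filter (valid m) (list_prod (list_prod [true; false] (zrange m)) (zrange k)).

Lemma in_codes m k b i j : In (b, i, j) (codes m k) <->
  ((0 <= i < m)%Z /\ (0 <= j < k)%Z /\ valid m (b, i, j) = true).
Proof.
  unfold codes. rewrite filter_In, !in_prod_iff, !in_zrange. split.
  - intros [[[Hb Hi] Hj] Hv]; auto.
  - intros (Hi & Hj & Hv). repeat split; auto; try lia. destruct b; simpl; auto.
Qed.

Lemma nodup_codes m k : NoDup (codes m k).
Proof.
  apply NoDup_filter. apply nodup_prod; [apply nodup_prod|]; try apply nodup_zrange.
  constructor; [simpl; intros [H|[]]; discriminate|]. constructor; [simpl; tauto|constructor].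
Qed.

Lemma trap_conv O e1 e2 (M K : R) x : 0 < K <= M ->
  conv [phi O e1 e2 0 0; phi O e1 e2 M 0; phi O e1 e2 (M - K) K; phi O e1 e2 0 K] x <->
  exists X Y, x = phi O e1 e2 X Y /\ 0 <= X /\ 0 <= Y /\ Y <= K /\ X + Y <= M.
Proof.
  intros HK. rewrite conv4_iff. split.
  - intros (w1 & w2 & w3 & w4 & h1 & h2 & h3 & h4 & hs & ->).
    exists (w2 * M + w3 * (M - K)), ((w3 + w4) * K).
    split; [replace w1 with (1 - w2 - w3 - w4) by lra; apply pt_eq; unfold phi; simpl; ring|].
    assert (0 <= w2 * M) by nra. assert (0 <= w3 * (M - K)) by nra.
    assert (w4 * K <= w4 * M) by nra. assert ((w3 + w4) * K <= 1 * K) by nra.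
    assert ((w2 + w3 + w4) * M <= 1 * M) by nra.
    repeat split; nra.
  - intros (X & Y & -> & h1 & h2 & h3 & h4).
    assert (E : exists s t, 0 <= s <= 1 /\ 0 <= t <= 1 /\ X = s * (M - t * K) /\ Y = t * K).
    { exists (if Req_EM_T (M - Y) 0 then 0 else X / (M - Y)), (Y / K).
      assert (Ht : Y / K * K = Y) by (field; lra).
      assert (0 <= Y / K <= 1).
      { split; [apply Rmult_le_pos; [lra|left; apply Rinv_0_lt_compat; lra]|].
        apply Rmult_le_reg_r with K; [lra|]. rewrite Ht; lra. }
      destruct (Req_EM_T (M - Y) 0) as [E|E].
      - repeat split; try lra.
      - assert (Hs : X / (M - Y) * (M - Y) = X) by (field; lra).
        repeat split; try lra.
        + apply Rmult_le_pos; [lra|left; apply Rinv_0_lt_compat; lra].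
        + apply Rmult_le_reg_r with (M - Y); [lra|]. rewrite Hs; lra.
        + rewrite Ht. lra. }
    destruct E as (s & t & hs & ht & -> & ->).
    exists ((1-t)*(1-s)), ((1-t)*s), (t*s), (t*(1-s)).
    repeat split; try nra. apply pt_eq; unfold phi; simpl; ring.
Qed.

Ltac zr H := apply IZR_le in H; rewrite ?plus_IZR, ?minus_IZR in H.

Lemma trap_union O e1 e2 (m k : Z) x : (1 <= k <= m)%Z ->
  (exists X Y, x = phi O e1 e2 X Y /\ 0 <= X /\ 0 <= Y /\ Y <= IZR k /\ X + Y <= IZR m) <->
  (exists c, In c (codes m k) /\ tri_region (tri O e1 e2 c) x).
Proof.
  intros Hkm. split.
  - intros (X & Y & -> & h1 & h2 & h3 & h4).
    destruct (floor_ex (k - 1) Y) as (j & Hj & Yj); [lia|rewrite minus_IZR; lra|].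
    destruct (floor_ex (m - j - 1) X) as (i & Hi & Xi); [lia|rewrite !minus_IZR; lra|].
    destruct (Rle_lt_dec (X + Y) (IZR i + IZR j + 1)) as [Hs|Hs].
    + exists (true, i, j). split.
      * apply in_codes. repeat split; try lia. simpl. apply Z.ltb_lt. lia.
      * apply tri_region_iff. exists X, Y. split; auto. simpl; lra.
    + exists (false, i, j). split.
      * apply in_codes. repeat split; try lia. simpl. apply Z.ltb_lt.
        apply lt_IZR. rewrite !plus_IZR. lra.
      * apply tri_region_iff. exists X, Y. split; auto. simpl; lra.
  - intros ([[b i] j] & Hc & Hx). apply in_codes in Hc. destruct Hc as (Hi & Hj & Hv).
    apply tri_region_iff in Hx. destruct Hx as (X & Y & -> & Hin). exists X, Y. split; auto.
    assert (A1 : (0 <= i)%Z) by lia. assert (A2 : (0 <= j)%Z) by lia.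
    assert (A3 : (j + 1 <= k)%Z) by lia. zr A1. zr A2. zr A3.
    destruct b; simpl in Hv, Hin; apply Z.ltb_lt in Hv.
    + assert (A4 : (i + j + 1 <= m)%Z) by lia. zr A4. lra.
    + assert (A4 : (i + j + 2 <= m)%Z) by lia. zr A4. lra.
Qed.

Lemma trap_polyiamond O e1 e2 (m k : Z) : gram e1 e2 -> (1 <= k <= m)%Z ->
  convex_polyiamond (conv [phi O e1 e2 0 0; phi O e1 e2 (IZR m) 0;
                           phi O e1 e2 (IZR m - IZR k) (IZR k); phi O e1 e2 0 (IZR k)]).
Proof.
  intros G Hkm. split; [apply convex4|].
  assert (HK : 0 < IZR k <= IZR m).
  { split; [apply IZR_lt; lia|apply IZR_le; lia]. }
  exists (map (tri O e1 e2) (codes m k)). split; [|split].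
  - intros T HT. apply in_map_iff in HT. destruct HT as (c & <- & _). apply tri_unit; auto.
  - intros a b d Hab Ha Hb. rewrite length_map in Ha, Hb.
    set (d0 := (true, 0%Z, 0%Z) : code).
    rewrite (nth_indep _ d (tri O e1 e2 d0)) by (rewrite length_map; auto).
    rewrite (nth_indep _ d (tri O e1 e2 d0)) by (rewrite length_map; auto).
    rewrite !map_nth. apply e2e_3d; auto. intro E.
    apply Hab. apply (proj1 (NoDup_nth (codes m k) d0) (nodup_codes m k)); auto.
  - intros x. rewrite trap_conv by auto. rewrite trap_union by auto. split.
    + intros (c & Hc & Hx). exists (tri O e1 e2 c). split; auto. apply in_map; auto.
    + intros (T & HT & Hx). apply in_map_iff in HT. destruct HT as (c & <- & Hc). eauto.
Qed.
Lemma facet (V Z : list pt) n c (F : pset) :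
  (forall x, F x <-> conv V x /\ dot n x = c) ->
  (forall v, In v V -> dot n v <= c) ->
  (forall v, In v V -> dot n v < c \/ In v Z) ->
  (forall v, In v Z -> dot n v = c) -> incl Z V ->
  forall x, F x <-> conv Z x.
Proof.
  intros HF Hle Hin HZ Hinc x. rewrite HF. split.
  - intros [H1 H2]. apply (conv_restrict V Z n c); auto.
  - intros H. split; [apply (conv_mono Z); auto|]. apply (conv_eq Z); auto.
Qed.

Lemma pair_contra (V : list pt) X Y n c (F : pset) p q r :
  (forall x, F x <-> conv V x /\ dot n x = c) ->
  (forall v, In v V -> dot n v <= c) ->
  (forall v, In v V -> dot n v < c \/ In v [X; Y]) ->
  F p -> F q -> F r -> cross (vsub q p) (vsub r p) = vzero.
Proof.
  intros HF Hle Hin Hp Hq Hr.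
  assert (K : forall z, F z -> conv [X; Y] z).
  { intros z Hz. apply HF in Hz. destruct Hz. apply (conv_restrict V _ n c); auto. }
  apply K, conv2_iff in Hp, Hq, Hr.
  destruct Hp as (s1 & _ & ->). destruct Hq as (s2 & _ & ->). destruct Hr as (s3 & _ & ->).
  apply pt_eq; unfold cross, vsub; simpl; ring.
Qed.

Ltac inl := simpl; repeat (first [left; reflexivity | right]).

Ltac vobl := let v := fresh "v" in let Hv := fresh "Hv" in
  intros v Hv; simpl in Hv;
  repeat (destruct Hv as [<-|Hv]); try contradiction; first [left; lra | right; solve [inl]].

Ltac zobl := let v := fresh "v" in let Hv := fresh "Hv" in
  intros v Hv; simpl in Hv; repeat (destruct Hv as [<-|Hv]); try contradiction; lra.

Ltac fac HF Hle Z := solve [eapply (facet _ Z _ _ _ HF Hle); [vobl | zobl | intros ? ?; solve [simpl in *; intuition]]].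

Lemma classify A0 B0 C0 D0 E0 G0 n c (F : pset) p q r :
  (forall x, F x <-> conv [A0;B0;C0;D0;E0;G0] x /\ dot n x = c) ->
  (forall v, In v [A0;B0;C0;D0;E0;G0] -> dot n v <= c) ->
  F p -> F q -> F r -> cross (vsub q p) (vsub r p) <> vzero ->
  dot n C0 = dot n B0 + dot n D0 - dot n A0 ->
  ~ (dot n A0 = c /\ dot n B0 = c /\ dot n D0 = c /\ dot n E0 = c) ->
  (G0 = E0 \/ ((dot n B0 < dot n A0 -> dot n G0 < dot n E0) /\
               (dot n B0 = dot n A0 -> dot n G0 = dot n E0) /\
               (dot n A0 < dot n B0 -> dot n E0 < dot n G0))) ->
  (forall x, F x <-> conv [A0;B0;C0;D0] x) \/ (forall x, F x <-> conv [A0;B0;G0;E0] x) \/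
  (forall x, F x <-> conv [D0;C0;G0;E0] x) \/ (forall x, F x <-> conv [A0;D0;E0] x) \/
  (forall x, F x <-> conv [B0;C0;G0] x).
Proof.
  intros HF Hle Hp Hq Hr Hcr HC Hnd Hsg.
  assert (hA := Hle A0 ltac:(inl)). assert (hB := Hle B0 ltac:(inl)).
  assert (hC := Hle C0 ltac:(inl)). assert (hD := Hle D0 ltac:(inl)).
  assert (hE := Hle E0 ltac:(inl)). assert (hG := Hle G0 ltac:(inl)).
  destruct Hsg as [HGE|(s1 & s2 & s3)];
  [subst G0 | destruct (Rtotal_order (dot n B0) (dot n A0)) as [h|[h|h]];
    [pose proof (s1 h) as hk | pose proof (s2 h) as hk | pose proof (s3 h) as hk]; clear s1 s2 s3];
  destruct (Rle_lt_or_eq _ _ hA) as [hA'|hA']; clear hA;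
  destruct (Rle_lt_or_eq _ _ hB) as [hB'|hB']; clear hB;
  destruct (Rle_lt_or_eq _ _ hC) as [hC'|hC']; clear hC;
  destruct (Rle_lt_or_eq _ _ hD) as [hD'|hD']; clear hD;
  destruct (Rle_lt_or_eq _ _ hE) as [hE'|hE']; clear hE;
  try (destruct (Rle_lt_or_eq _ _ hG) as [hG'|hG']; clear hG);
  first
  [ exfalso; lra
  | exfalso; apply Hnd; repeat split; lra
  | left; fac HF Hle [A0;B0;C0;D0]
  | right; left; fac HF Hle [A0;B0;G0;E0]
  | right; right; left; fac HF Hle [D0;C0;G0;E0]
  | right; right; right; left; fac HF Hle [A0;D0;E0]
  | right; right; right; right; fac HF Hle [B0;C0;G0]
  | right; left; fac HF Hle [A0;B0;E0;E0]
  | right; right; left; fac HF Hle [D0;C0;E0;E0]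
  | right; right; right; right; fac HF Hle [B0;C0;E0]
  | exfalso; apply Hcr;
    match goal with
    | H1 : dot _ ?X = _, H2 : dot _ ?Y = _ |- _ =>
        solve [apply (pair_contra _ X Y n c F p q r HF Hle); [vobl|assumption|assumption|assumption]]
    end
  | exfalso; apply Hcr; solve [apply (pair_contra _ A0 A0 n c F p q r HF Hle); [vobl|assumption|assumption|assumption]]
  ].
Qed.
Lemma domed_ext V (P P' : pset) : (forall x, P x <-> P' x) -> domed_by V P -> domed_by V P'.
Proof.
  intros E (H1 & (n & c & h1 & h2 & h3 & (p & q & r & hp & hq & hr & hc)) & H3).
  split; [auto|split].
  - exists n, c. split; auto. split; auto. split.
    + intros x. rewrite <- E. auto.
    + exists p, q, r. rewrite <- !E. auto.
  - intros F HFc. destruct (H3 F HFc) as [H|H]; [left|right; auto].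
    intros x. rewrite H. auto.
Qed.

Definition sq2 := sqrt 2 / 2.

Lemma sq2_facts : sq2 * sq2 = 1/2 /\ 0 < sq2.
Proof.
  unfold sq2. split.
  - assert (H := sqrt_sqrt 2 ltac:(lra)).
    replace (sqrt 2 / 2 * (sqrt 2 / 2)) with (sqrt 2 * sqrt 2 / 4) by field. rewrite H. field.
  - assert (0 < sqrt 2) by (apply sqrt_lt_R0; lra). lra.
Qed.


Lemma dome (ma kb : Z) : (1 <= kb <= ma)%Z ->
  let A := IZR ma in let B := IZR kb in let s := sq2 in
  domed_by [Pt 0 0 0; Pt A 0 0; Pt A B 0; Pt 0 B 0; Pt (B/2) (B/2) (B*s); Pt (A - B/2) (B/2) (B*s)]
    (rectangle (Pt 0 0 0) (Pt 1 0 0) (Pt 0 1 0) A B).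
Proof.
  intros Hkm A B s.
  destruct sq2_facts as [Hss Hs]. fold s in Hss, Hs.
  assert (HB : 1 <= B) by (apply IZR_le; lia).
  assert (HAB : B <= A) by (apply IZR_le; lia).
  assert (HBs : 0 < B * s) by (apply Rmult_lt_0_compat; lra).
  set (A0 := Pt 0 0 0). set (B0 := Pt A 0 0). set (C0 := Pt A B 0). set (D0 := Pt 0 B 0).
  set (E0 := Pt (B/2) (B/2) (B*s)). set (G0 := Pt (A - B/2) (B/2) (B*s)).
  assert (Rect : forall x, rectangle A0 (Pt 1 0 0) (Pt 0 1 0) A B x <-> conv [A0;B0;C0;D0] x).
  { intros x. rewrite conv4_iff. unfold rectangle. split.
    - intros (s1 & t1 & h1 & h2 & ->).
      assert (E : exists sg tg, 0 <= sg <= 1 /\ 0 <= tg <= 1 /\ s1 = sg * A /\ t1 = tg * B).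
      { exists (s1 / A), (t1 / B).
        assert (s1 / A * A = s1) by (field; lra). assert (t1 / B * B = t1) by (field; lra).
        assert (0 <= s1 / A) by (apply Rmult_le_pos; [lra|left; apply Rinv_0_lt_compat; lra]).
        assert (0 <= t1 / B) by (apply Rmult_le_pos; [lra|left; apply Rinv_0_lt_compat; lra]).
        assert (s1 / A <= 1) by (apply Rmult_le_reg_r with A; lra).
        assert (t1 / B <= 1) by (apply Rmult_le_reg_r with B; lra).
        repeat split; lra. }
      destruct E as (sg & tg & hs & ht & -> & ->).
      exists ((1-sg)*(1-tg)), (sg*(1-tg)), (sg*tg), ((1-sg)*tg). repeat split; try nra.
      apply pt_eq; unfold A0, B0, C0, D0; simpl; ring.
    - intros (w1 & w2 & w3 & w4 & h1 & h2 & h3 & h4 & hs & ->).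
      exists (A * (w2 + w3)), (B * (w3 + w4)). repeat split; try nra.
      apply pt_eq; unfold A0, B0, C0, D0; simpl; ring. }
  set (V := [A0;B0;C0;D0;E0;G0]).
  assert (Base : forall x, (conv V x /\ dot (Pt 0 0 (-1)) x = 0) <-> conv [A0;B0;C0;D0] x).
  { apply (facet V [A0;B0;C0;D0] (Pt 0 0 (-1)) 0 (fun x => conv V x /\ dot (Pt 0 0 (-1)) x = 0)).
    - intros; tauto.
    - intros v Hv; simpl in Hv; repeat destruct Hv as [<-|Hv]; try contradiction;
      unfold dot; simpl; lra.
    - intros v Hv; simpl in Hv; repeat destruct Hv as [<-|Hv]; try contradiction;
      first [right; solve [inl] | left; unfold dot; simpl; lra].
    - intros v Hv; simpl in Hv; repeat destruct Hv as [<-|Hv]; try contradiction;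
      unfold dot; simpl; lra.
    - intros v Hv; simpl in *; tauto. }
  split; [|split].
  -
    exists A0, B0, D0, E0. unfold V; repeat split; try solve [inl].
    unfold dot, cross, vsub, A0, B0, D0, E0; simpl.
    match goal with |- ?e <> 0 => replace e with (A * (B * (B * s))) by ring end.
    apply Rgt_not_eq. apply Rmult_lt_0_compat; [lra|]. apply Rmult_lt_0_compat; [lra|exact HBs].
  -
    exists (Pt 0 0 (-1)), 0. split; [intro H; injection H; lra|]. split.
    + intros x Hx. apply (conv_le V); auto. intros v Hv; simpl in Hv;
      repeat destruct Hv as [<-|Hv]; try contradiction; unfold dot; simpl; lra.
    + split.
      * intros x. rewrite Base, Rect. tauto.
      * exists A0, B0, D0. rewrite !Rect. repeat split; try (apply conv_in; inl).
        unfold cross, vsub, A0, B0, D0; simpl. intro H; injection H; intros. nra.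
  -
    intros F (n & c & Hn0 & Hsup & HF & (p & q & r & Fp & Fq & Fr & Hcr)).
    assert (Hle : forall v, In v V -> dot n v <= c) by (intros v Hv; apply Hsup, conv_in; auto).
    destruct n as [n1 n2 n3].
    assert (HC : dot (Pt n1 n2 n3) C0 = dot (Pt n1 n2 n3) B0 + dot (Pt n1 n2 n3) D0 - dot (Pt n1 n2 n3) A0)
      by (unfold dot; simpl; ring).
    assert (Hnd : ~ (dot (Pt n1 n2 n3) A0 = c /\ dot (Pt n1 n2 n3) B0 = c /\
                    dot (Pt n1 n2 n3) D0 = c /\ dot (Pt n1 n2 n3) E0 = c)).
    { intros (h1 & h2 & h3 & h4). apply Hn0. unfold dot, A0, B0, D0, E0 in *; simpl in *.
      assert (c = 0) by lra. subst c.
      assert (K1 : n1 * A = 0) by lra. assert (K2 : n2 * B = 0) by lra.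
      apply Rmult_integral in K1. apply Rmult_integral in K2.
      destruct K1 as [K1|K1]; [|lra]. destruct K2 as [K2|K2]; [|lra]. subst n1 n2.
      assert (K3 : n3 * (B * s) = 0) by lra. apply Rmult_integral in K3.
      destruct K3 as [K3|K3]; [|lra].
      subst n3. reflexivity. }
    assert (Hsg : G0 = E0 \/
      ((dot (Pt n1 n2 n3) B0 < dot (Pt n1 n2 n3) A0 -> dot (Pt n1 n2 n3) G0 < dot (Pt n1 n2 n3) E0) /\
       (dot (Pt n1 n2 n3) B0 = dot (Pt n1 n2 n3) A0 -> dot (Pt n1 n2 n3) G0 = dot (Pt n1 n2 n3) E0) /\
       (dot (Pt n1 n2 n3) A0 < dot (Pt n1 n2 n3) B0 -> dot (Pt n1 n2 n3) E0 < dot (Pt n1 n2 n3) G0))).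
    { destruct (Z.eq_dec ma kb) as [E|E].
      - left. assert (A = B) by (unfold A, B; rewrite E; reflexivity).
        apply pt_eq; unfold G0, E0; simpl; lra.
      - right. assert (B < A) by (apply IZR_lt; lia).
        unfold dot, A0, B0, E0, G0; simpl. repeat split; intros; nra. }
    destruct (classify A0 B0 C0 D0 E0 G0 (Pt n1 n2 n3) c F p q r HF Hle Fp Fq Fr Hcr HC Hnd Hsg)
      as [H|[H|[H|[H|H]]]].
    + left. intros x. rewrite H, Rect. tauto.
    + right. apply (convex_polyiamond_ext _ _ H).
      assert (T := trap_polyiamond A0 (Pt 1 0 0) (Pt (1/2) (1/2) s) ma kb).
      fold A B in T.
      assert (e1 : phi A0 (Pt 1 0 0) (Pt (1/2) (1/2) s) 0 0 = A0)
        by (apply pt_eq; unfold phi, A0; simpl; field).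
      assert (e2 : phi A0 (Pt 1 0 0) (Pt (1/2) (1/2) s) A 0 = B0)
        by (apply pt_eq; unfold phi, A0, B0; simpl; field).
      assert (e3 : phi A0 (Pt 1 0 0) (Pt (1/2) (1/2) s) (A - B) B = G0)
        by (apply pt_eq; unfold phi, A0, G0; simpl; field).
      assert (e4 : phi A0 (Pt 1 0 0) (Pt (1/2) (1/2) s) 0 B = E0)
        by (apply pt_eq; unfold phi, A0, E0; simpl; field).
      rewrite e1, e2, e3, e4 in T. apply T; auto.
      unfold gram, dot; simpl; repeat split; lra.
    + right. apply (convex_polyiamond_ext _ _ H).
      assert (T := trap_polyiamond D0 (Pt 1 0 0) (Pt (1/2) (-1/2) s) ma kb).
      fold A B in T.
      assert (e1 : phi D0 (Pt 1 0 0) (Pt (1/2) (-1/2) s) 0 0 = D0)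
        by (apply pt_eq; unfold phi, D0; simpl; field).
      assert (e2 : phi D0 (Pt 1 0 0) (Pt (1/2) (-1/2) s) A 0 = C0)
        by (apply pt_eq; unfold phi, D0, C0; simpl; field).
      assert (e3 : phi D0 (Pt 1 0 0) (Pt (1/2) (-1/2) s) (A - B) B = G0)
        by (apply pt_eq; unfold phi, D0, G0; simpl; field).
      assert (e4 : phi D0 (Pt 1 0 0) (Pt (1/2) (-1/2) s) 0 B = E0)
        by (apply pt_eq; unfold phi, D0, E0; simpl; field).
      rewrite e1, e2, e3, e4 in T. apply T; auto.
      unfold gram, dot; simpl; repeat split; lra.
    + right. assert (H' : forall x, F x <-> conv [A0;D0;E0;E0] x).
      { intros x; rewrite H. apply conv_ext; intros y; simpl; tauto. }
      apply (convex_polyiamond_ext _ _ H').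
      assert (T := trap_polyiamond A0 (Pt 0 1 0) (Pt (1/2) (1/2) s) kb kb).
      fold B in T.
      assert (e1 : phi A0 (Pt 0 1 0) (Pt (1/2) (1/2) s) 0 0 = A0)
        by (apply pt_eq; unfold phi, A0; simpl; field).
      assert (e2 : phi A0 (Pt 0 1 0) (Pt (1/2) (1/2) s) B 0 = D0)
        by (apply pt_eq; unfold phi, A0, D0; simpl; field).
      assert (e3 : phi A0 (Pt 0 1 0) (Pt (1/2) (1/2) s) (B - B) B = E0)
        by (apply pt_eq; unfold phi, A0, E0; simpl; field).
      assert (e4 : phi A0 (Pt 0 1 0) (Pt (1/2) (1/2) s) 0 B = E0)
        by (apply pt_eq; unfold phi, A0, E0; simpl; field).
      rewrite e1, e2, e3, e4 in T. apply T; [|lia].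
      unfold gram, dot; simpl; repeat split; lra.
    + right. assert (H' : forall x, F x <-> conv [B0;C0;G0;G0] x).
      { intros x; rewrite H. apply conv_ext; intros y; simpl; tauto. }
      apply (convex_polyiamond_ext _ _ H').
      assert (T := trap_polyiamond B0 (Pt 0 1 0) (Pt (-1/2) (1/2) s) kb kb).
      fold B in T.
      assert (e1 : phi B0 (Pt 0 1 0) (Pt (-1/2) (1/2) s) 0 0 = B0)
        by (apply pt_eq; unfold phi, B0; simpl; field).
      assert (e2 : phi B0 (Pt 0 1 0) (Pt (-1/2) (1/2) s) B 0 = C0)
        by (apply pt_eq; unfold phi, B0, C0; simpl; field).
      assert (e3 : phi B0 (Pt 0 1 0) (Pt (-1/2) (1/2) s) (B - B) B = G0)
        by (apply pt_eq; unfold phi, B0, G0; simpl; field).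
      assert (e4 : phi B0 (Pt 0 1 0) (Pt (-1/2) (1/2) s) 0 B = G0)
        by (apply pt_eq; unfold phi, B0, G0; simpl; field).
      rewrite e1, e2, e3, e4 in T. apply T; [|lia].
      unfold gram, dot; simpl; repeat split; lra.
Qed.
Theorem lemma1 (a b : nat) (ha : (0 < a)%nat) (hb : (0 < b)%nat) :
  exists (V : list pt) (o u v : pt),
    orthonormal u v /\ domed_by V (rectangle o u v (INR a) (INR b)).
Proof.
  rewrite !INR_IZR_INZ.
  destruct (le_lt_dec b a) as [H|H].
  - assert (D := dome (Z.of_nat a) (Z.of_nat b) ltac:(lia)). cbv zeta in D.
    eexists; exists (Pt 0 0 0), (Pt 1 0 0), (Pt 0 1 0). split; [|exact D].
    unfold orthonormal, dot; simpl; repeat split; ring.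
  - assert (D := dome (Z.of_nat b) (Z.of_nat a) ltac:(lia)). cbv zeta in D.
    eexists; exists (Pt 0 0 0), (Pt 0 1 0), (Pt 1 0 0). split.
    + unfold orthonormal, dot; simpl; repeat split; ring.
    + eapply domed_ext; [|exact D]. intros x. unfold rectangle. split.
      * intros (s & t & h1 & h2 & ->). exists t, s. split; auto. split; auto.
        apply pt_eq; simpl; ring.
      * intros (s & t & h1 & h2 & ->). exists t, s. split; auto. split; auto.
        apply pt_eq; simpl; ring.
Qed.
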